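(* Let $Q$ be an $[[n,k,d]]$ stabilizer code with codespace projector $P_Q$ whose Shor–Laflamme enumerators satisfy $A_{2i+1}=0$ for all $i$. Then $$B_n\le\frac{1}{L(n)}\,\frac{3^n}{2^{n-k}}.$$
   Context: For an $[[n,k,d]]$ stabilizer code with projector $P_Q$ onto its $2^k$-dimensional codespace, the Shor–Laflamme enumerators are $A_i=\frac{1}{2^{2k}}\sum_{\sigma:w(\sigma)=i}\mathrm{Tr}[\sigma P_Q]\mathrm{Tr}[\sigma^\dagger P_Q]$ and $B_i=\frac{1}{2^k}\sum_{\sigma:w(\sigma)=i}\mathrm{Tr}[\sigma P_Q\sigma^\dagger P_Q]$, where $\sigma$ ranges over the $n$-qubit Pauli operators $\{\mathbb{1},X,Y,Z\}^{\otimes n}$ and $w(\sigma)$ is the number of non-identity tensor factors. The quaternary Krawtchouk polynomials are $K_w(l)=\sum_{j=0}^{w}\binom{l}{j}\binom{n-l}{w-j}(-1)^j3^{w-j}$. $L(n)$ is the optimal value of the linear program in variables $y_0,\dots,y_{\lfloor n/2\rfloor}\in\mathbb{R}$: minimize $3^ny_0$ subject to $y_j\ge0$ for all $j$, $\sum_{j=0}^{\lfloor n/2\rfloor}K_i(2j)y_j\ge0$ for $i=0,\dots,n$, and $\sum_{j=0}^{\lfloor n/2\rfloor}3^{n-2j}y_j=1$. *)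

(* Defs.v *)
From HB Require Import structures.
From mathcomp Require Import all_boot all_order all_algebra.
From mathcomp Require Import complex.
From mathcomp Require Import classical_sets reals.
Set Implicit Arguments. Unset Strict Implicit. Unset Printing Implicit Defensive.
Import Order.TTheory GRing.Theory Num.Theory.
Local Open Scope ring_scope.
Local Open Scope complex_scope.

Section Defs.
Variable R : realType.
Local Notation C := R[i].

(* Single-qubit Pauli labels: 0 = identity, 1 = X, 2 = Y, 3 = Z.
   Entry (a,b) of the 2x2 matrix, with a,b the row/column basis bits. *)
Definition pauli1 (p : 'I_4) (a b : bool) : C :=
  match val p with
  | 0 => if a == b then 1 else 0
  | 1 => if a == b then 0 else 1
  | 2 => if a == b then 0 else if a then 'i else - 'i
  | _ => if a == b then (if a then -1 else 1) else 0
  end.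

Definition qbit (r i : nat) : bool := odd (r %/ 2 ^ i).

Definition pstring (n : nat) := {ffun 'I_n -> 'I_4}.

(* the 2^n x 2^n matrix of the tensor product sigma_0 (x) ... (x) sigma_{n-1} *)
Definition pmat (n : nat) (s : pstring n) : 'M[C]_(2 ^ n) :=
  \matrix_(r, c) \prod_(i < n) pauli1 (s i) (qbit r i) (qbit c i).

Definition pweight (n : nat) (s : pstring n) : nat := #|[set i | s i != ord0]|.

Definition pid (n : nat) : pstring n := [ffun => ord0].

Definition adjmx (m : nat) (M : 'M[C]_m) : 'M[C]_m := map_mx conjc (trmx M).

Definition smat (n : nat) (e : bool * pstring n) : 'M[C]_(2 ^ n) :=
  (-1) ^+ e.1 *: pmat e.2.

(* S is the stabilizer group of an [[n,k]] stabilizer code: an abelian subgroup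
   of the n-qubit Pauli group not containing -1, with n-k independent generators
   (equivalently 2^(n-k) elements). *)
Definition stab_closed (n : nat) (S : {set bool * pstring n}) : Prop :=
  forall a b, a \in S -> b \in S ->
    exists c, c \in S /\ smat c = smat a *m smat b.

Definition stab_abelian (n : nat) (S : {set bool * pstring n}) : Prop :=
  forall a b, a \in S -> b \in S -> smat a *m smat b = smat b *m smat a.

Definition is_stabilizer_group (n k : nat) (S : {set bool * pstring n}) : Prop :=
  [/\ (k <= n)%N, #|S| = (2 ^ (n - k))%N,
      (false, pid n) \in S /\ (true, pid n) \notin S,
      stab_closed S & stab_abelian S].

Definition codespace_proj (n : nat) (S : {set bool * pstring n}) : 'M[C]_(2 ^ n) :=
  (#|S|%:R)^-1 *: \sum_(e in S) smat e.

Definition SL_A (n k : nat) (P : 'M[C]_(2 ^ n)) (i : nat) : C :=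
  ((2 ^ (2 * k))%:R)^-1 *
  \sum_(s : pstring n | pweight s == i)
     \tr (pmat s *m P) * \tr (adjmx (pmat s) *m P).

Definition SL_B (n k : nat) (P : 'M[C]_(2 ^ n)) (i : nat) : C :=
  ((2 ^ k)%:R)^-1 *
  \sum_(s : pstring n | pweight s == i)
     \tr (pmat s *m P *m adjmx (pmat s) *m P).

Definition kraw (n w l : nat) : R :=
  \sum_(j < w.+1) (-1) ^+ j * ('C(l, j) * 'C(n - l, w - j) * 3 ^ (w - j))%:R.

Definition LP_feasible (n : nat) (y : 'I_(n./2).+1 -> R) : Prop :=
  [/\ (forall j, 0 <= y j),
      (forall i : 'I_n.+1, 0 <= \sum_(j < (n./2).+1) kraw n i (2 * j) * y j)
    & \sum_(j < (n./2).+1) (3 ^ (n - 2 * j))%:R * y j = 1].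

Definition LPval (n : nat) : R :=
  inf [set v | exists y, @LP_feasible n y /\ v = (3 ^ n)%:R * y ord0].

End Defs.

(* Main.v *)
Require Import Defs.
From HB Require Import structures.
From mathcomp Require Import all_boot all_order all_algebra.
From mathcomp Require Import complex.
From mathcomp Require Import classical_sets reals.
From mathcomp Require Import ring zify lra.
Set Implicit Arguments. Unset Strict Implicit. Unset Printing Implicit Defensive.
Import Order.TTheory GRing.Theory Num.Theory.
Local Open Scope ring_scope.
Local Open Scope complex_scope.
Lemma qbit_lo n r i : (i < n)%N -> qbit (r + 2^n) i = qbit r i.
Proof.
move=> lt_in; rewrite /qbit -(subnK (ltnW lt_in)) expnD divnDr ?dvdn_mull //.
rewrite mulnK ?expn_gt0 // oddD oddX subn_eq0 leqNgt lt_in /=.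
by rewrite addbF.
Qed.

Lemma qbit_top n r : (r < 2^n)%N -> qbit r n = false.
Proof. by move=> h; rewrite /qbit divn_small. Qed.

Lemma qbit_top2 n r : (r < 2^n)%N -> qbit (r + 2^n) n = true.
Proof. by move=> h; rewrite /qbit divnDr // divnn expn_gt0 /= divn_small. Qed.

Lemma sum_pow2 (T : nmodType) n (G : nat -> T) :
  \sum_(r < 2^n.+1) G r = \sum_(r < 2^n) G r + \sum_(r < 2^n) G (r + 2^n)%N.
Proof.
rewrite -!(big_mkord xpredT) expnS mul2n -addnn (big_cat_nat _ (leq_addr _ _)) //=.
congr (_ + _); rewrite -{1}(add0n (2^n)%N) big_addn addnK.
by rewrite big_mkord.
Qed.

Lemma tsum (T : comNzRingType) n (F : 'I_n -> bool -> T) :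
  \sum_(r < 2^n) \prod_(i < n) F i (qbit r i) = \prod_(i < n) (F i false + F i true).
Proof.
elim: n F => [|n IH] F.
  by rewrite big_ord1 !big_ord0.
rewrite (@sum_pow2 T n (fun r => \prod_(i < n.+1) F i (qbit r i))) [RHS]big_ord_recr /=.
under eq_bigr => r _ do rewrite big_ord_recr /= qbit_top //.
under [X in _ + X = _]eq_bigr => r _ do rewrite big_ord_recr /= qbit_top2 //.
under [X in _ + X = _]eq_bigr => r _ do under eq_bigr => i _ do rewrite qbit_lo //.
by rewrite -!big_distrl /= (IH (fun i => F (widen_ord (leqnSn n) i))) mulrDr.
Qed.

Lemma qbit_inj n r c : (r < 2^n)%N -> (c < 2^n)%N ->
  (forall i, (i < n)%N -> qbit r i = qbit c i) -> r = c.
Proof.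
elim: n r c => [|n IH] r c.
  by rewrite expn0 !ltnS !leqn0 => /eqP -> /eqP ->.
move=> hr hc H.
have h0 : odd r = odd c by have := H 0%N isT; rewrite /qbit !divn1.
have h2 : (r %/ 2 = c %/ 2)%N.
  apply: IH; rewrite ?ltn_divLR // -?expnSr //.
  by move=> i hi; have := H i.+1 hi; rewrite /qbit expnS !divnMA.
by rewrite -[r]odd_double_half -[c]odd_double_half h0 -!divn2 h2.
Qed.

Section Main.
Variable R : realType.
Local Notation C := R[i].
Local Notation M := (@pauli1 R).

Definition tens n (G : 'I_n -> bool -> bool -> C) : 'M[C]_(2^n) :=
  \matrix_(r, c) \prod_(i < n) G i (qbit r i) (qbit c i).

Lemma pmatE n (s : pstring n) : pmat R s = tens (fun i => M (s i)).
Proof. by []. Qed.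

Lemma tensM n (G H : 'I_n -> bool -> bool -> C) :
  tens G *m tens H = tens (fun i a c => \sum_(b : bool) G i a b * H i b c).
Proof.
apply/matrixP => r c; rewrite !mxE.
under eq_bigr => m _ do rewrite !mxE -big_split /=.
rewrite (tsum (fun i b => G i (qbit r i) b * H i b (qbit c i))).
by apply: eq_bigr => i _; rewrite big_bool addrC.
Qed.

Lemma tens_tr n (G : 'I_n -> bool -> bool -> C) :
  \tr (tens G) = \prod_(i < n) \sum_(a : bool) G i a a.
Proof.
rewrite /mxtrace; under eq_bigr => m _ do rewrite mxE.
rewrite (tsum (fun i b => G i b b)).
by apply: eq_bigr => i _; rewrite big_bool addrC.
Qed.

Lemma tensZ n (e : 'I_n -> C) (G : 'I_n -> bool -> bool -> C) :
  tens (fun i a b => e i * G i a b) = (\prod_(i < n) e i) *: tens G.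
Proof. by apply/matrixP => r c; rewrite !mxE big_split. Qed.

Lemma tens1 n : tens (fun (i : 'I_n) (a b : bool) => ((a == b)%:R : C)) = 1%:M.
Proof.
apply/matrixP => r c; rewrite !mxE.
case: eqP => [->|ne].
  by rewrite big1 // => i _; rewrite eqxx.
have [i hi] : exists i : 'I_n, qbit r i != qbit c i.
  apply/existsP; rewrite -negb_forall; apply/negP => /forallP H.
  apply: ne; apply/val_inj/(@qbit_inj n) => [||i hi]; rewrite ?ltn_ord //.
  by have := H (Ordinal hi); move/eqP.
by rewrite (bigD1 i) //= (negbTE hi) mul0r.
Qed.

Lemma tens_adj n (G : 'I_n -> bool -> bool -> C) :
  adjmx (tens G) = tens (fun i a b => conjc (G i b a)).
Proof. by apply/matrixP => r c; rewrite !mxE rmorph_prod. Qed.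



Lemma mulC (a b c d : R) : (a +i* b) * (c +i* d) = (a*c - b*d) +i* (a*d + b*c) :> C.
Proof. by []. Qed.
Lemma addC (a b c d : R) : (a +i* b) + (c +i* d) = (a + c) +i* (b + d) :> C.
Proof. by []. Qed.
Lemma realC (a : R) : a%:C = a +i* 0 :> C. Proof. by []. Qed.
Lemma conjC (a b : R) : conjc (a +i* b) = a +i* (- b) :> C. Proof. by []. Qed.

Definition epsR (p q : 'I_4) : R :=
  if (val p == 0%N) || (val q == 0%N) || (val p == val q) then 1 else -1.
Definition re (p : 'I_4) (a b : bool) : R :=
  match val p with
  | 0 => if a == b then 1 else 0
  | 1 => if a == b then 0 else 1
  | 2 => 0
  | _ => if a == b then (if a then -1 else 1) else 0 end.
Definition im (p : 'I_4) (a b : bool) : R :=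
  match val p with
  | 2 => if a == b then 0 else if a then 1 else -1
  | _ => 0 end.
Lemma Mri p a b : M p a b = re p a b +i* im p a b.
Proof.
case: p => -[|[|[|[|//]]]] Hp; case: a; case: b; rewrite /pauli1 /re /im /=; simpc => //.
Qed.

Ltac crunch := do ! (rewrite mulC || rewrite addC || rewrite conjC).

Lemma herm1 p a b : conjc (M p b a) = M p a b.
Proof.
rewrite !Mri; crunch.
case: p => -[|[|[|[|//]]]] Hp; case: a; case: b; rewrite /re /im /=; congr (_ +i* _); ring.
Qed.

Lemma sq1 p a c : \sum_(b : bool) M p a b * M p b c = ((a == c)%:R : R)%:C.
Proof.
rewrite !big_bool /= !Mri realC; crunch.
case: p => -[|[|[|[|//]]]] Hp; case: a; case: c; rewrite /re /im /=; congr (_ +i* _); ring.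
Qed.

Lemma tr1 p : \sum_(a : bool) M p a a = (if val p == 0%N then 2 else 0 : R)%:C.
Proof.
rewrite !big_bool /= !Mri realC; crunch.
case: p => -[|[|[|[|//]]]] Hp; rewrite /re /im /=; congr (_ +i* _); ring.
Qed.

Lemma tr21 p q : \sum_(a : bool) \sum_(b : bool) M p a b * M q b a
   = (if val p == val q then 2 else 0 : R)%:C.
Proof.
rewrite !big_bool /= !Mri realC; crunch.
case: p => -[|[|[|[|//]]]] Hp; case: q => -[|[|[|[|//]]]] Hq; rewrite /re /im /=; congr (_ +i* _); ring.
Qed.

Lemma conj1 (p q : 'I_4) a c :
  \sum_(b : bool) (\sum_(b' : bool) M p a b' * M q b' b) * M p b c = (epsR p q)%:C * M q a c.
Proof.
rewrite !big_bool /= !Mri realC; crunch.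
case: p => -[|[|[|[|//]]]] Hp; case: q => -[|[|[|[|//]]]] Hq; case: a; case: c; rewrite /epsR /re /im /=;
  congr (_ +i* _); ring.
Qed.



Lemma prod_ind n (P : 'I_n -> bool) :
  \prod_(i < n) (if P i then 2 else 0 : R) = if [forall i, P i] then 2 ^+ n else 0.
Proof.
case: (boolP [forall i, P i]) => [/forallP H|].
  under eq_bigr => i _ do rewrite H.
  by rewrite prodr_const card_ord.
rewrite negb_forall => /existsP [i Hi].
by rewrite (bigD1 i) //= (negbTE Hi) mul0r.
Qed.

Lemma eq_pstring n (s t : pstring n) : [forall i, val (s i) == val (t i)] = (s == t).
Proof.
apply/forallP/eqP => [H|-> //].
by apply/ffunP => i; apply/val_inj/eqP/H.
Qed.

Lemma pmat_herm n (s : pstring n) : adjmx (pmat R s) = pmat R s.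
Proof.
rewrite pmatE tens_adj; apply/matrixP => r c; rewrite !mxE.
by apply: eq_bigr => i _; rewrite herm1.
Qed.

Lemma pmat_sq n (s : pstring n) : pmat R s *m pmat R s = 1%:M.
Proof.
rewrite pmatE tensM -(tens1 n); apply/matrixP => r c; rewrite !mxE.
by apply: eq_bigr => i _; rewrite sq1 rmorph_nat.
Qed.

Lemma pmat_tr n (s : pstring n) : \tr (pmat R s) = (if s == pid n then 2 ^+ n else 0 : R)%:C.
Proof.
rewrite pmatE tens_tr; under eq_bigr => i _ do rewrite tr1.
rewrite -rmorph_prod prod_ind; congr ((if _ then _ else _)%:C).
rewrite -eq_pstring; apply: eq_forallb => i; by rewrite ffunE.
Qed.

Lemma pmat_tr2 n (s t : pstring n) :
  \tr (pmat R s *m pmat R t) = (if s == t then 2 ^+ n else 0 : R)%:C.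
Proof.
rewrite !pmatE tensM tens_tr; under eq_bigr => i _ do rewrite tr21.
by rewrite -rmorph_prod prod_ind eq_pstring.
Qed.

Definition chi n (s t : pstring n) : R := \prod_(i < n) epsR (s i) (t i).

Lemma pmat_conj n (s t : pstring n) :
  pmat R s *m pmat R t *m pmat R s = (chi s t)%:C *: pmat R t.
Proof.
rewrite !pmatE !tensM; apply/matrixP => r c; rewrite !mxE rmorph_prod -big_split /=.
by apply: eq_bigr => i _; rewrite conj1.
Qed.



Lemma pweight_sum n (s : pstring n) : pweight s = (\sum_(i < n) (s i != ord0))%N.
Proof.
rewrite /pweight -sum1_card big_mkcond /=; apply: eq_bigr => i _.
by rewrite inE; case: (s i != ord0).
Qed.

Lemma pweight_le n (s : pstring n) : (pweight s <= n)%N.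
Proof. by rewrite /pweight -[X in (_ <= X)%N]card_ord max_card. Qed.

Lemma coef_lin (c : R) m j : ((c *: 'X + 1) ^+ m)`_j = c ^+ j *+ 'C(m, j).
Proof.
rewrite exprD1n coef_sum.
under eq_bigr => i _ do rewrite exprZn coefMn coefZ coefXn.
case: (ltnP j m.+1) => hj.
  rewrite (bigD1 (Ordinal hj)) //= eqxx mulr1 big1 ?addr0 // => i /negbTE.
  by rewrite -val_eqE /= eq_sym => ->; rewrite mulr0 mul0rn.
rewrite bin_small // mulr0n big1 // => i _.
by rewrite eq_sym (ltn_eqF (leq_trans (ltn_ord i) hj)) mulr0 mul0rn.
Qed.

Lemma kraw_coef n w l :
  kraw R n w l = ((1 - 'X) ^+ l * (1 + 'X *+ 3) ^+ (n - l) : {poly R})`_w.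
Proof.
have -> : (1 - 'X : {poly R}) = (-1) *: 'X + 1 by rewrite scaleN1r addrC.
have -> : (1 + 'X *+ 3 : {poly R}) = 3%:R *: 'X + 1 by rewrite scaler_nat addrC.
rewrite coefM /kraw; apply: eq_bigr => j _; rewrite !coef_lin.
rewrite !natrM natrX -(mulr_natr ((-1) ^+ j)) -(mulr_natr (3 ^+ (w - j))).
by rewrite !mulrA [RHS]mulrAC.
Qed.

Lemma fact1 (q : 'I_4) :
  \sum_(p < 4) (epsR p q)%:P * 'X^(p != ord0) =
  (if q == ord0 then 1 + 'X *+ 3 else 1 - 'X : {poly R}).
Proof.
rewrite !big_ord_recl big_ord0 /epsR /=.
case: q => -[|[|[|[|//]]]] Hq; rewrite /= ?polyCN ?polyC1 ?expr0 ?expr1; 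
  rewrite /bump /=; ring.
Qed.

Lemma genfun n (t : pstring n) :
  \sum_(s : pstring n) (chi s t)%:P * 'X^(pweight s) =
  (1 - 'X) ^+ (pweight t) * (1 + 'X *+ 3) ^+ (n - pweight t) :> {poly R}.
Proof.
transitivity (\sum_(s : pstring n) \prod_(i < n) ((epsR (s i) (t i))%:P * 'X^(s i != ord0))).
  apply: eq_bigr => s _; rewrite big_split /= -rmorph_prod prodrXr -pweight_sum.
  by [].
rewrite -(bigA_distr_bigA (fun i p => (epsR p (t i))%:P * 'X^(p != ord0))) /=.
under eq_bigr => i _ do rewrite fact1.
rewrite (bigID (fun i => t i == ord0)) /=.
under eq_bigr => i hi do rewrite hi.
under [X in _ * X]eq_bigr => i hi do rewrite (negbTE hi).
rewrite !prodr_const mulrC; congr (_ ^+ _ * _ ^+ _).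
  by rewrite /pweight cardsE.
have h := cardC [pred i | t i != ord0]; rewrite card_ord in h.
have hA : (#|[pred i | t i != ord0]| <= n)%N by rewrite -[X in (_ <= X)%N]h leq_addr.
rewrite /pweight cardsE.
apply/eqP; rewrite -(eqn_add2l #|[pred i | t i != ord0]|) subnKC //.
rewrite -[X in _ == X]h eqn_add2l; apply/eqP.
by apply: eq_card => i; rewrite !inE negbK.
Qed.

Lemma mwid n (t : pstring n) w :
  \sum_(s : pstring n | pweight s == w) chi s t = kraw R n w (pweight t).
Proof.
rewrite kraw_coef -genfun coef_sum big_mkcond /=; apply: eq_bigr => s _.
by rewrite coefCM coefXn eq_sym; case: eqP; rewrite ?mulr1 ?mulr0.
Qed.




Lemma kraw_top n l : (l <= n)%N -> kraw R n n l = (-1) ^+ l * (3 ^ (n - l))%:R.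
Proof.
move=> hl; rewrite /kraw (bigD1 (@Ordinal n.+1 l hl)) //= big1 ?addr0.
  by rewrite !binn !mul1n.
move=> j /negbTE hj; case: (ltngtP j l) => [jl|jl|je].
- have hj2 : (j <= n)%N by rewrite -ltnS.
  rewrite (@bin_small (n - l) (n - j)) ?muln0 ?mul0n ?mulr0 //; lia.
- by rewrite bin_small // mul0n mulr0.
- by move: hj; rewrite -val_eqE /= je eqxx.
Qed.

Lemma sum_eps (q : 'I_4) : \sum_(p < 4) epsR p q = if val q == 0%N then 4 else 0.
Proof.
rewrite !big_ord_recl big_ord0 /epsR.
by case: q => -[|[|[|[|//]]]] Hq /=; ring.
Qed.

Lemma pidE n (i : 'I_n) : pid n i = ord0.
Proof. by rewrite /pid; exact: ffunE. Qed.

Lemma pweight_eq0 n (s : pstring n) : (pweight s == 0%N) = (s == pid n).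
Proof.
rewrite /pweight cards_eq0; apply/eqP/eqP => [H|->].
  apply/ffunP => i; rewrite pidE; apply/eqP; apply/negPn/negP => hi.
  have : i \in [set i | s i != ord0] by rewrite inE.
  by rewrite H inE.
by apply/finset.setP => i; rewrite !inE pidE eqxx.
Qed.

Lemma sum_chi n (t : pstring n) : \sum_(s : pstring n) chi s t = if t == pid n then 4 ^+ n else 0.
Proof.
rewrite /chi -(bigA_distr_bigA (fun i p => epsR p (t i))) /=.
under eq_bigr => i _ do rewrite sum_eps.
case: (boolP (t == pid n)) => [/eqP ->|].
  under eq_bigr => i _ do rewrite pidE eqxx.
  by rewrite prodr_const card_ord.
rewrite -eq_pstring negb_forall => /existsP [i Hi].
rewrite pidE in Hi.
by rewrite (bigD1 i) //= (negbTE Hi) mul0r.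
Qed.

Lemma sum_lt n l : (\sum_(i < n) ((i < l)%N : nat))%N = minn l n.
Proof.
elim: n => [|n IH]; first by rewrite big_ord0 minn0.
rewrite big_ord_recr /= IH; case: (ltnP n l) => h /=; lia.
Qed.

Lemma kraw_sum n l : (l <= n)%N ->
  \sum_(w < n.+1) kraw R n w l = if l == 0%N then 4 ^+ n else 0.
Proof.
move=> hl.
pose x1 : 'I_4 := @Ordinal 4 1 isT.
pose t : pstring n := [ffun i : 'I_n => if (i < l)%N then x1 else ord0].
have wt : pweight t = l.
  rewrite pweight_sum -[RHS](minn_idPl hl) -sum_lt; apply: eq_bigr => i _.
  by rewrite ffunE; case: (i < l)%N.
rewrite -wt pweight_eq0.
under eq_bigr => w _ do rewrite -mwid.
rewrite -(sum_chi t).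
rewrite (partition_big (fun s : pstring n => @Ordinal n.+1 (pweight s) (pweight_le s)) xpredT) //=.
Qed.

Lemma double_le n (j : 'I_(n./2).+1) : (2 * j <= n)%N.
Proof.
have h := ltn_ord j; rewrite ltnS in h.
have e := odd_double_half n.
have h2 : ((n./2).*2 <= n)%N by rewrite -[X in (_ <= X)%N]e leq_addl.
by rewrite mul2n (leq_trans _ h2) // leq_double.
Qed.

Lemma LP_lower n (y : 'I_(n./2).+1 -> R) : LP_feasible y -> 1 <= 4 ^+ n * y ord0.
Proof.
case=> y0 yc ysum.
have bsum : \sum_(i < n.+1) \sum_(j < (n./2).+1) kraw R n i (2 * j) * y j = 4 ^+ n * y ord0.
  rewrite exchange_big /=.
  under eq_bigr => j _ do rewrite -big_distrl /= kraw_sum ?double_le //.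
  rewrite big_ord_recl /= big1 ?addr0 // => j _.
  by rewrite mul0r.
have bn : \sum_(j < (n./2).+1) kraw R n n (2 * j) * y j = 1.
  rewrite -ysum; apply: eq_bigr => j _.
  by rewrite kraw_top ?double_le // exprM expr2 mulrNN mulr1 expr1n mul1r.
rewrite -bsum -bn [in X in _ <= X](bigD1 ord_max) //= -[X in X <= _]addr0 lerD //.
by apply: sumr_ge0 => i _; exact: (yc i).
Qed.

Definition LPset n : classical_sets.set R := fun v : R => exists y, @LP_feasible R n y /\ v = (3 ^ n)%:R * y ord0.

Lemma LPset_lb n : has_lbound (LPset n).
Proof.
exists 0 => v [y [[y0 _ _] ->]].
by rewrite mulr_ge0 // ler0n.
Qed.

Lemma LP_le n y : @LP_feasible R n y -> LPval R n <= (3 ^ n)%:R * y ord0.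
Proof.
move=> hy; apply: (ge_inf (LPset_lb n)); by exists y.
Qed.

Lemma LP_pos n y : @LP_feasible R n y -> 0 < LPval R n.
Proof.
move=> hy; apply: (@lt_le_trans _ _ ((3 ^ n)%:R / 4 ^+ n)).
  by rewrite divr_gt0 // ?ltr0n ?expn_gt0 // exprn_gt0.
apply: lb_le_inf; first by exists ((3 ^ n)%:R * y ord0); exists y.
move=> v [y' [hy' ->]].
rewrite ler_pdivrMr ?exprn_gt0 // -mulrA ler_peMr ?ler0n //.
by rewrite mulrC; apply: LP_lower.
Qed.

Lemma LP_ge0 n : 0 <= LPval R n.
Proof.
case: (boolp.pselect (exists y, @LP_feasible R n y)) => [[y hy]|ne].
  exact: ltW (LP_pos hy).
have -> : LPval R n = inf (@set0 R).
  congr inf; apply/boolp.funext => v; apply/boolp.propext; split => //.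
  by move=> [y [hy _]]; apply: ne; exists y.
by rewrite inf0.
Qed.




Lemma signC b : ((-1) ^+ b : C) = ((-1) ^+ b : R)%:C.
Proof. by rewrite rmorph_sign. Qed.

Lemma tr_pm_sm n (t : pstring n) e :
  \tr (pmat R t *m smat R e) = ((-1) ^+ e.1 * (if t == e.2 then 2 ^+ n else 0) : R)%:C.
Proof. by rewrite /smat -scalemxAr mxtraceZ pmat_tr2 signC -rmorphM. Qed.

Lemma smat_sq n (e : bool * pstring n) : smat R e *m smat R e = 1%:M.
Proof.
by rewrite /smat -scalemxAl -scalemxAr pmat_sq scalerA -expr2 sqrr_sign scale1r.
Qed.

Lemma smat_conj n (s : pstring n) e :
  pmat R s *m smat R e *m pmat R s = (chi s e.2)%:C *: smat R e.
Proof.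
by rewrite /smat -scalemxAr -scalemxAl pmat_conj !scalerA mulrC.
Qed.

Lemma two_n_neq0 n : (2 ^+ n : R) != 0.
Proof. by rewrite expf_eq0 pnatr_eq0 andbF. Qed.

Lemma smat_inj n (e f : bool * pstring n) : smat R e = smat R f -> e = f.
Proof.
move=> h; have := congr1 (fun A => \tr (pmat R e.2 *m A)) h.
rewrite /= !tr_pm_sm eqxx => /complexI.
case: (eqVneq e.2 f.2) => [E|NE] Hv; last first.
  by move/eqP: Hv; rewrite mulr0 mulf_eq0 signr_eq0 (negbTE (two_n_neq0 n)).
move/mulIf: Hv => /(_ (two_n_neq0 n)) /signr_inj E1.
by case: e f E E1 {h} => [b t] [b' t'] /= -> ->.
Qed.

Lemma pmat_pid n : pmat R (pid n) = 1%:M.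
Proof.
rewrite pmatE -(tens1 n); apply/matrixP => r c; rewrite !mxE.
by apply: eq_bigr => i _; rewrite pidE /pauli1 /=; case: (_ == _).
Qed.

Lemma one_neq0 n : (1%:M : 'M[C]_(2 ^ n)) != 0.
Proof.
apply/negP => /eqP h; have := congr1 mxtrace h; rewrite mxtrace1 mxtrace0.
by move/eqP; rewrite pnatr_eq0 expn_eq0.
Qed.

Lemma chi_mul n (s : pstring n) a b c :
  smat R c = smat R a *m smat R b -> chi s c.2 = chi s a.2 * chi s b.2.
Proof.
move=> hc.
have h : (chi s c.2)%:C *: smat R c = (chi s a.2 * chi s b.2)%:C *: smat R c.
  rewrite -smat_conj hc rmorphM -scalerA scalemxAr -smat_conj scalemxAl -smat_conj !mulmxA.
  by rewrite -[pmat R s *m smat R a *m pmat R s *m pmat R s]mulmxA pmat_sq mulmx1.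
apply/eqP; rewrite -subr_eq0; apply/negPn/negP => ne.
move/eqP: h; rewrite -subr_eq0 -scalerBl -rmorphB scalemx_eq0 => /orP [/eqP h0|/eqP hc0].
  by move: ne; rewrite (complexI (h0 : _ = 0%:C)) eqxx.
by have := smat_sq c; rewrite hc0 mul0mx => /esym /eqP; rewrite (negbTE (one_neq0 n)).
Qed.

Lemma chi_sq n (s t : pstring n) : chi s t ^+ 2 = 1.
Proof.
rewrite /chi -prodrXl big1 // => i _.
by rewrite /epsR; case: ifP => _; rewrite ?sqrrN expr1n.
Qed.

Lemma chi_N1 n (s t : pstring n) : chi s t != 1 -> chi s t = -1.
Proof.
by move=> ne; have := chi_sq s t; move/eqP; rewrite sqrf_eq1 (negbTE ne) /= => /eqP.
Qed.




Lemma tr_sum (I : finType) (A : pred I) m (F : I -> 'M[C]_m) :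
  \tr (\sum_(i in A) F i) = \sum_(i in A) \tr (F i).
Proof. exact: raddf_sum. Qed.

Section Stab.
Variables (n k : nat) (S : {set bool * pstring n}).
Hypothesis HS : @is_stabilizer_group R n k S.

Lemma S_clos a b : a \in S -> b \in S -> exists c, c \in S /\ smat R c = smat R a *m smat R b.
Proof. by case: HS => _ _ _ hc _; apply: hc. Qed.

Lemma S_id : (false, pid n) \in S.
Proof. by case: HS => _ _ [] . Qed.

Lemma S_nid : (true, pid n) \notin S.
Proof. by case: HS => _ _ []. Qed.

Lemma S_card : #|S| = (2 ^ (n - k))%N.
Proof. by case: HS. Qed.

Lemma S_kn : (k <= n)%N.
Proof. by case: HS. Qed.

Lemma label_inj e f : e \in S -> f \in S -> e.2 = f.2 -> e = f.
Proof.
case: e f => [b t] [b' t'] /= eS fS Et; subst t'.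
case: (eqVneq b b') => [-> //|nb].
have [c [cS hc]] := S_clos eS fS.
have ec : c = (true, pid n).
  apply: smat_inj; rewrite hc /smat /= -scalemxAl -scalemxAr pmat_sq scalerA pmat_pid.
  by case: b b' nb {eS fS hc} => [] [] //= _; rewrite ?expr0 ?expr1 ?mulr1 ?mul1r.
by move: S_nid; rewrite -ec cS.
Qed.

Definition mulS e0 f := odflt e0 [pick c in S | smat R c == smat R e0 *m smat R f].

Lemma mulS_spec e0 f : e0 \in S -> f \in S ->
  mulS e0 f \in S /\ smat R (mulS e0 f) = smat R e0 *m smat R f.
Proof.
move=> e0S fS; rewrite /mulS; case: pickP => [c /andP [cS /eqP hc]|none] /=; first by split.
have [c [cS hc]] := S_clos e0S fS.
by have := none c; rewrite cS hc eqxx.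
Qed.

Lemma charsum (s : pstring n) : 0 <= \sum_(e in S) chi s e.2.
Proof.
case: (pickP [pred e | (e \in S) && (chi s e.2 != 1)]) => [e0 /andP [e0S ne]|none]; last first.
  apply: sumr_ge0 => e eS; have := none e; rewrite /= eS /= => /negbFE /eqP ->.
  exact: ler01.
have hinj : {in S &, injective (mulS e0)}.
  move=> f f' fS f'S h.
  have [_ h1] := mulS_spec e0S fS; have [_ h2] := mulS_spec e0S f'S.
  apply: smat_inj.
  have : smat R e0 *m smat R f = smat R e0 *m smat R f' by rewrite -h1 -h2 h.
  by move/(congr1 (mulmx (smat R e0))); rewrite !mulmxA smat_sq !mul1mx.
have himg : mulS e0 @: S = S.
  apply/eqP; rewrite eqEcard card_in_imset // leqnn andbT.
  by apply/fintype.subsetP => x /finset.imsetP [f fS ->]; case: (mulS_spec e0S fS).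
have h : \sum_(e in S) chi s e.2 = - \sum_(e in S) chi s e.2.
  rewrite -{1}himg big_imset //= -sumrN; apply: eq_bigr => f fS.
  have [_ hf] := mulS_spec e0S fS.
  by rewrite (chi_mul s hf) (chi_N1 ne) mulN1r.
lra.
Qed.


Definition aS (s : pstring n) : R := \sum_(e in S) (if e.2 == s then (-1) ^+ e.1 else 0).
Definition Acount l : R := \sum_(e in S) (if pweight e.2 == l then 1 else 0).
Definition Xw w : R := \sum_(s : pstring n | pweight s == w) \sum_(e in S) chi s e.2.

Lemma natC m : (m%:R : C) = (m%:R : R)%:C.
Proof. by rewrite rmorph_nat. Qed.

Lemma trP s : \tr (pmat R s *m codespace_proj R S) = (((2 ^ (n - k))%:R)^-1 * 2 ^+ n * aS s)%:C.
Proof.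
rewrite /codespace_proj -scalemxAr mxtraceZ mulmx_sumr tr_sum.
under eq_bigr => e _ do rewrite tr_pm_sm.
rewrite -rmorph_sum S_card natC -fmorphV -rmorphM.
congr (_%:C); rewrite -mulrA; congr (_ * _); rewrite /aS mulr_sumr; apply: eq_bigr => e _.
by rewrite eq_sym; case: eqP; rewrite ?mulr0 // mulrC.
Qed.

Lemma c_eq : ((2 ^ (n - k))%:R)^-1 * 2 ^+ n = 2 ^+ k :> R.
Proof.
rewrite -{2}(subnK S_kn) exprD natrX mulrA mulVf ?mul1r //.
by rewrite expf_eq0 pnatr_eq0 andbF.
Qed.

Lemma asq s : aS s ^+ 2 = \sum_(e in S) (if e.2 == s then 1 else 0).
Proof.
case: (pickP [pred e | (e \in S) && (e.2 == s)]) => [e0 /andP [e0S /eqP E]|none].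
  have other : forall e, e \in S -> e != e0 -> (e.2 == s) = false.
    move=> e eS ne; apply/negP => /eqP Es; case/eqP: ne; apply: label_inj => //.
    by rewrite Es E.
  rewrite /aS !(bigD1 e0 e0S) /= E eqxx !big1 ?addr0 ?sqrr_sign // => e /andP [eS ne];
    by rewrite other.
rewrite /aS !big1 ?expr2 ?mul0r // => e eS; by have := none e; rewrite /= eS /= => ->.
Qed.

Lemma SLA_form l : SL_A k (codespace_proj R S) l = (Acount l)%:C.
Proof.
rewrite /SL_A.
under eq_bigr => s _ do rewrite pmat_herm !trP c_eq -rmorphM.
rewrite -rmorph_sum natC -fmorphV -rmorphM; congr (_%:C).
under eq_bigr => s _ do rewrite mulrACA -!expr2 asq.
rewrite -mulr_sumr mulrA natrX mulnC exprM mulVf ?mul1r; last first.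
  by rewrite !expf_eq0 pnatr_eq0 !andbF.
rewrite exchange_big /=; apply: eq_bigr => e _.
rewrite big_mkcond /= (bigD1 e.2) //= eqxx big1 ?addr0 => [|s ne].
  by case: ifP.
by rewrite [e.2 == s]eq_sym (negbTE ne); case: ifP.
Qed.


Lemma tr_ss (e f : bool * pstring n) : \tr (smat R e *m smat R f) =
  ((-1) ^+ e.1 * ((-1) ^+ f.1 * (if e.2 == f.2 then 2 ^+ n else 0)) : R)%:C.
Proof. by rewrite {1}/smat -scalemxAl mxtraceZ tr_pm_sm signC -rmorphM. Qed.

Lemma sum_tr_ss e : e \in S -> \sum_(f in S) \tr (smat R e *m smat R f) = (2 ^+ n : R)%:C.
Proof.
move=> eS; rewrite (bigD1 e eS) /= big1 ?addr0 => [|f /andP [fS ne]].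
  by rewrite tr_ss eqxx mulrA -expr2 sqrr_sign mul1r.
rewrite tr_ss; case: eqP => [E|_]; last by rewrite !mulr0.
by case/eqP: ne; apply: label_inj.
Qed.

Lemma trB s : \tr (pmat R s *m codespace_proj R S *m adjmx (pmat R s) *m codespace_proj R S)
  = ((((2 ^ (n - k))%:R)^-1) ^+ 2 * 2 ^+ n * \sum_(e in S) chi s e.2)%:C.
Proof.
rewrite pmat_herm /codespace_proj.
set c0 := (#|S|%:R)^-1 : C.
have E1 : pmat R s *m (c0 *: \sum_(e in S) smat R e) *m pmat R s =
          c0 *: \sum_(e in S) (chi s e.2)%:C *: smat R e.
  rewrite -scalemxAr -scalemxAl mulmx_sumr mulmx_suml; congr (_ *: _).
  by apply: eq_bigr => e _; rewrite smat_conj.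
rewrite E1 -scalemxAr -scalemxAl mxtraceZ mxtraceZ mulmx_suml tr_sum.
under eq_bigr => e _ do rewrite -scalemxAl mxtraceZ mulmx_sumr tr_sum.
under eq_bigr => e eS do rewrite sum_tr_ss //.
under eq_bigr => e _ do rewrite -rmorphM.
rewrite -rmorph_sum /c0 S_card natC -fmorphV -!rmorphM; congr (_%:C).
by rewrite -mulr_suml expr2; ring.
Qed.

Lemma SLB_form w : SL_B k (codespace_proj R S) w = (2 ^+ k / 2 ^+ n * Xw w)%:C.
Proof.
rewrite /SL_B.
under eq_bigr => s _ do rewrite trB.
rewrite -rmorph_sum natC -fmorphV -rmorphM; congr (_%:C).
rewrite /Xw -mulr_sumr mulrA; congr (_ * _).
have e2 : (2 ^+ n : R) = (2 ^ (n - k))%:R * 2 ^+ k by rewrite natrX -exprD subnK // S_kn.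
rewrite e2 natrX; field.
by rewrite expf_eq0 !pnatr_eq0 andbF expn_eq0.
Qed.

Lemma MacW w : Xw w = \sum_(e in S) kraw R n w (pweight e.2).
Proof.
rewrite /Xw exchange_big /=; apply: eq_bigr => e _.
by rewrite mwid.
Qed.

Lemma Xw_ge0 w : 0 <= Xw w.
Proof. by apply: sumr_ge0 => s _; apply: charsum. Qed.

Lemma Acount0 : Acount 0 = 1.
Proof.
rewrite /Acount (bigD1 _ S_id) /= pweight_eq0 eqxx big1 ?addr0 // => e /andP [eS ne].
case: ifP => // /eqP /eqP; rewrite pweight_eq0 => /eqP E.
by case/eqP: ne; apply: label_inj => //; rewrite ?S_id.
Qed.

Hypothesis HA : forall i : nat, SL_A k (codespace_proj R S) i.*2.+1 = 0.

Lemma even_wt e : e \in S -> ~~ odd (pweight e.2).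
Proof.
move=> eS; apply/negP => od.
have := HA (pweight e.2)./2.
have -> : ((pweight e.2)./2).*2.+1 = pweight e.2.
  by rewrite -[RHS]odd_double_half od.
rewrite SLA_form => h; have := complexI (h : _ = 0%:C).
rewrite /Acount (bigD1 e eS) /= eqxx.
have : 0 <= \sum_(i in S | i != e) (if pweight i.2 == pweight e.2 then 1 else 0 : R).
  by apply: sumr_ge0 => i _; case: ifP.
move=> ?; lra.
Qed.

End Stab.

End Main.

Theorem proposition6 (R : realType) (n k : nat) (S : {set bool * pstring n}) :
  @is_stabilizer_group R n k S ->
  (forall i : nat, @SL_A R n k (@codespace_proj R n S) i.*2.+1 = 0) ->
  @SL_B R n k (@codespace_proj R n S) n
    <= ((LPval R n)^-1 * ((3 ^ n)%:R / (2 ^ (n - k))%:R))%:C.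
Proof.
move=> HS HA.
rewrite (SLB_form HS) lecR.
set Xn := Xw R S n.
have Xn0 : 0 <= Xn := Xw_ge0 HS n.
have e2 : (2 ^+ n : R) = (2 ^ (n - k))%:R * 2 ^+ k.
  by rewrite natrX -exprD subnK // (S_kn HS).
have p2 : 0 < ((2 ^ (n - k))%:R : R) by rewrite ltr0n expn_gt0.
have -> : 2 ^+ k / 2 ^+ n * Xn = Xn / (2 ^ (n - k))%:R.
  rewrite e2; field; by rewrite expf_eq0 !pnatr_eq0 andbF expn_eq0.
case: (eqVneq Xn 0) => [X0|Xnz].
  rewrite X0 mul0r mulr_ge0 // ?invr_ge0 ?LP_ge0 // divr_ge0 // ler0n.
have Xpos : 0 < Xn by rewrite lt_def Xnz Xn0.
pose y (j : 'I_(n./2).+1) := Acount R S (2 * j)%N / Xn.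
have key : forall i, \sum_(j < (n./2).+1) kraw R n i (2 * j) * y j = Xw R S i / Xn.
  move=> i; rewrite /y (MacW R S i).
  under eq_bigr => j _ do rewrite mulrA.
  rewrite -mulr_suml; congr (_ / _).
  rewrite /Acount; under eq_bigr => j _ do rewrite mulr_sumr.
  rewrite exchange_big /=; apply: eq_bigr => e eS.
  have ev := even_wt HS HA eS.
  set w := pweight e.2.
  have hw : (w./2 < (n./2).+1)%N by rewrite ltnS half_leq // pweight_le.
  have ew : (2 * w./2)%N = w.
    by rewrite mul2n; have := odd_double_half w; rewrite (negbTE ev) add0n.
  rewrite (bigD1 (Ordinal hw)) //= ew eqxx mulr1 big1 ?addr0 // => j ne.
  case: eqP => [E|]; last by rewrite mulr0.
  case/eqP: ne; apply: val_inj => /=.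
  by rewrite E mul2n doubleK.
have hfeas : LP_feasible y.
  split.
  - move=> j; apply: divr_ge0; last exact: ltW.
    by rewrite /Acount; apply: sumr_ge0 => e _; case: ifP.
  - by move=> i; rewrite key divr_ge0 // ?(Xw_ge0 HS) // ltW.
  - transitivity (\sum_(j < (n./2).+1) kraw R n n (2 * j) * y j); last first.
      by rewrite key divff.
    apply: eq_bigr => j _.
    by rewrite kraw_top ?double_le // exprM expr2 mulrNN mulr1 expr1n mul1r.
have hL := LP_le hfeas; have Lpos := LP_pos hfeas.
rewrite /y muln0 (Acount0 HS) mul1r ler_pdivlMr // in hL.
have h1 : Xn <= (LPval R n)^-1 * (3 ^ n)%:R by rewrite ler_pdivlMl // mulrC.
by rewrite mulrA ler_pM2r ?invr_gt0.
Qed.
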